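(* For every cache size $k\ge 1$, there is a deterministic online paging algorithm for the discard-predictions setup that is $(1,k-1,1)$-competitive. That is, there is a constant $b$ (possibly depending on $k$) such that for every request sequence $I$ and every prediction vector $p$, the number of page faults of the algorithm satisfies $\mathrm{ALG}(I,p)\le \mathrm{OPT}(I)+(k-1)\,\eta_0(p,p^* )+\eta_1(p,p^* )+b$.
   Context: Paging: there is a universe $U$ of pages and a cache holding at most $k$ pages, initially empty. Requests $r_1,\dots,r_n\in U$ arrive online. If the requested page is not in the cache (a page fault), it must be loaded into the cache, evicting some cached page if the cache already holds $k$ pages. The cost of an algorithm is its number of page faults. An online algorithm decides evictions without knowing future requests; $\mathrm{OPT}(I)$ is the minimum cost of an offline algorithm on request sequence $I$. Along with each request $r_i$ the online algorithm receives a prediction bit $p_i\in\{0,1\}$ (which may be arbitrary). Given the ground truth vector $p^*\in\{0,1\}^n$, define for $h\in\{0,1\}$: $\eta_h(p,p^* )=|\{i\in[n] : p_i=h,\ p_i^*=1-h\}|$. An algorithm is $(\alpha,\beta,\gamma)$-competitive if there is a constant $b$ (possibly depending on $k$) such that for every instance $I$ and all predictions $p$, $\mathrm{ALG}(I,p)\le \alpha\,\mathrm{OPT}(I)+\beta\,\eta_0(p,p^* )+\gamma\,\eta_1(p,p^* )+b$ (for randomized algorithms, $\mathrm{ALG}(I,p)$ is the expected cost). Discard-predictions setup: fix the optimal offline algorithm LFD, which on a fault with full cache evicts a cached page that is never requested again if one exists, and otherwise the cached page whose next request is furthest in the future (ties broken by a fixed rule). The ground truth is $p_i^*=0$ if LFD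 keeps page $r_i$ in its cache until the next request to $r_i$ (or until the end of the sequence if there is no further request), and $p_i^*=1$ if LFD evicts $r_i$ before it is requested again. *)

(* Defs.v *)
From mathcomp Require Import all_boot.
Set Implicit Arguments. Unset Strict Implicit. Unset Printing Implicit Defensive.

Section Paging.
Variable U : eqType.

(* The cache is a
   duplicate-free sequence of pages.  On a hit nothing changes; on a fault
   with a non-full cache the page is simply loaded; on a fault with a full
   cache the proposed victim is evicted (if the proposal is not a cached page,
   the first cached page is evicted instead, so every proposal function yields
   a legal paging algorithm). *)
Definition step (k : nat) (cache : seq U) (r : U) (victim : U) : seq U :=
  if r \in cache then cache
  else if size cache < k then rcons cache r
  else let v := if victim \in cache then victim else head r cache in
       rcons (rem v cache) r.

(* An online algorithm proposes a victim from the current cache and the history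
   of (request, prediction) pairs seen so far, the current one included. *)
Definition online_alg := seq U -> seq (U * bool) -> U.

Fixpoint on_cost (k : nat) (alg : online_alg) (cache : seq U)
    (hist : seq (U * bool)) (rest : seq (U * bool)) : nat :=
  match rest with
  | [::] => 0
  | (r, b) :: rest' =>
      let h := rcons hist (r, b) in
      (r \notin cache) + on_cost k alg (step k cache r (alg cache h)) h rest'
  end.

Definition ALG (k : nat) (alg : online_alg) (I : seq U) (p : seq bool) : nat :=
  on_cost k alg [::] [::] (zip I p).

(* An offline algorithm (for a fixed, fully known sequence I) proposes a victim
   as a function of the time step and the current cache. *)
Definition offline_alg := nat -> seq U -> U.

Fixpoint off_cost (k : nat) (ev : offline_alg) (t : nat) (cache : seq U)
    (rest : seq U) : nat :=
  match rest with
  | [::] => 0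
  | r :: rest' => (r \notin cache) + off_cost k ev t.+1 (step k cache r (ev t cache)) rest'
  end.

Definition offline_cost k ev (I : seq U) := off_cost k ev 0 [::] I.

Definition is_OPT (k : nat) (I : seq U) (opt : nat) : Prop :=
  (exists ev : offline_alg, offline_cost k ev I = opt) /\
  (forall ev : offline_alg, opt <= offline_cost k ev I).

(* Cache contents after each step: the i-th entry is the cache after
   serving request i. *)
Fixpoint trace (k : nat) (ev : offline_alg) (t : nat) (cache : seq U)
    (rest : seq U) : seq (seq U) :=
  match rest with
  | [::] => [::]
  | r :: rest' => let c' := step k cache r (ev t cache) in
                  c' :: trace k ev t.+1 c' rest'
  end.

Definition req_after (I : seq U) (t : nat) (q : U) : bool := q \in drop t.+1 I.
(* index of the next request to q after time t (size I if none) *)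
Definition next_req (I : seq U) (t : nat) (q : U) : nat :=
  t.+1 + index q (drop t.+1 I).

Definition is_LFD_rule (lfd : seq U -> nat -> seq U -> U) : Prop :=
  forall (I : seq U) (t : nat) (c : seq U), c != [::] ->
    lfd I t c \in c /\
    (if has (fun q => ~~ req_after I t q) c
     then is_true (~~ req_after I t (lfd I t c))
     else forall q, q \in c -> next_req I t q <= next_req I t (lfd I t c)).

(* Ground truth p*_i (0-indexed) for request r = r_i: false (=0) iff LFD keeps
   r in its cache from step i until just before the next request to r (or
   until the end of the sequence), true (=1) iff LFD evicts it in between. *)
Definition pstar (k : nat) (lfd : seq U -> nat -> seq U -> U) (I : seq U)
    (i : nat) (r : U) : bool :=
  let tr := trace k (lfd I) 0 [::] I in
  ~~ all (fun j => r \in nth [::] tr j) (iota i (next_req I i r - i)).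

Definition eta (k : nat) (lfd : seq U -> nat -> seq U -> U) (h : bool)
    (I : seq U) (p : seq bool) : nat :=
  count (fun x : nat * U * bool =>
           let: (i, r, b) := x in (b == h) && (pstar k lfd I i r == ~~ h))
        (zip (zip (iota 0 (size I)) I) p).
End Paging.

(* Main.v *)
Require Import Defs.
From mathcomp Require Import all_boot zify.
Set Implicit Arguments. Unset Strict Implicit. Unset Printing Implicit Defensive.

Section Gen.
Variable T : eqType.

Lemma mem_rem_neq (x y : T) (s : seq T) : y \in s -> y != x -> y \in rem x s.
Proof.
elim: s => //= c s IH; rewrite in_cons => /orP [/eqP ->|ys] yx.
  by rewrite (negbTE yx) mem_head.
by case: ifP => _ //; rewrite in_cons IH ?orbT.
Qed.

Lemma index_rcons_in (x z : T) (s : seq T) : x \in s -> index x (rcons s z) = index x s.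
Proof. by move=> xs; rewrite -cats1 index_cat xs. Qed.

Lemma index_rcons_last (z : T) (s : seq T) : z \notin s -> index z (rcons s z) = size s.
Proof. by move=> zs; rewrite -cats1 index_cat (negbTE zs) /= eqxx addn0. Qed.

Lemma rem_before (v x y : T) (s : seq T) : uniq s -> x \in rem v s -> y \in rem v s ->
  index x (rem v s) < index y (rem v s) -> index x s < index y s.
Proof.
elim: s => //= c s IH /andP [cs us].
case: (eqVneq c v) => [ecv|cv] xr yr.
  subst v.
  have xc : x != c by apply: contraNneq cs => <-.
  have yc : y != c by apply: contraNneq cs => <-.
  by rewrite eq_sym (negbTE xc) eq_sym (negbTE yc).
move: xr yr; rewrite /= !in_cons.
case: (eqVneq c x) => [ecx|cx]; case: (eqVneq c y) => [ecy|cy] //=.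
rewrite ltnS => xr yr; rewrite ltnS; exact: IH.
Qed.

Lemma index_ge (x0 x : T) (s : seq T) (a : nat) : a <= size s ->
  (forall m, m < a -> nth x0 s m != x) -> a <= index x s.
Proof.
elim: s a => [|c s IH] [|a] //= ha H.
have := H 0 isT; rewrite /= eq_sym => /negbTE ->.
rewrite ltnS; apply: IH => // m hm; exact: (H m.+1).
Qed.

Lemma index_eq (x0 x : T) (s : seq T) (a : nat) : a < size s -> nth x0 s a = x ->
  (forall m, m < a -> nth x0 s m != x) -> index x s = a.
Proof.
move=> ha hx H; apply/eqP; rewrite eqn_leq (index_ge (x0:=x0)) ?andbT; last by [].
  rewrite leqNgt; apply/negP => lt.
  by have := before_find x0 lt; rewrite hx /= eqxx.
by apply: ltnW.
Qed.

Lemma perm_rem_cons (a y : T) (s : seq T) : y \in s -> perm_eq (rem y (a :: s)) (a :: rem y s).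
Proof.
move=> ys; rewrite rem_cons; case: eqP => [->|_] //.
exact: perm_to_rem.
Qed.

Lemma perm_rcons2 (s1 s2 : seq T) (z : T) : perm_eq s1 s2 -> perm_eq (rcons s1 z) (rcons s2 z).
Proof. by move=> h; rewrite perm_rcons perm_sym perm_rcons perm_cons perm_sym. Qed.

Lemma perm_rem2 (y : T) (s1 s2 : seq T) : y \in s1 -> perm_eq s1 s2 -> perm_eq (rem y s1) (rem y s2).
Proof.
move=> ys p; have ys2 : y \in s2 by rewrite -(perm_mem p).
rewrite -(perm_cons y); apply: perm_trans (perm_to_rem ys2).
by rewrite perm_sym; apply: perm_trans (perm_to_rem ys); rewrite perm_sym.
Qed.

Lemma size_remS (y : T) (s : seq T) : y \in s -> (size (rem y s)).+1 = size s.
Proof. by move=> ys; rewrite size_rem // prednK //; case: s ys. Qed.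

Lemma perm_swap_rem (y a : T) (s : seq T) : y \in s ->
  perm_eq (y :: rcons (rem y s) a) (a :: s).
Proof.
move=> ys.
apply: (@perm_trans _ (y :: a :: rem y s)); first by rewrite perm_cons perm_rcons.
apply: (@perm_trans _ (a :: y :: rem y s)).
  by have := perm_catCA [:: y] [:: a] (rem y s); rewrite /= => ->.
by rewrite perm_cons perm_sym; apply: perm_to_rem.
Qed.

End Gen.

Lemma count_inj (T1 T2 : eqType) (P : pred T1) (R : T1 -> T2 -> Prop)
  (L : seq T1) (M : seq T2) : uniq L ->
  (forall x, x \in L -> P x -> exists y, y \in M /\ R x y) ->
  (forall x1 x2 y, x1 \in L -> x2 \in L -> P x1 -> P x2 -> R x1 y -> R x2 y -> x1 = x2) ->
  count P L <= size M.
Proof.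
elim: L M => [|x L IH] M //= /andP [xL uL] Hex Hinj.
case Px: (P x) => /=; last first.
  apply: IH => // [z zL Pz|x1 x2 y h1 h2]; first by apply: Hex; rewrite // in_cons zL orbT.
  by apply: Hinj; rewrite in_cons ?h1 ?h2 orbT.
have [y [yM Rxy]] := Hex x (mem_head _ _) Px.
have -> : size M = (size (rem y M)).+1.
  by rewrite size_rem // prednK // -has_predT; apply/hasP; exists y.
rewrite ltnS; apply: IH => // [z zL Pz|x1 x2 y' h1 h2].
  have zxL : z \in x :: L by rewrite in_cons zL orbT.
  have [y' [y'M R']] := Hex z zxL Pz.
  exists y'; split => //; apply: mem_rem_neq => //.
  apply/eqP => ey; subst y'.
  have := Hinj z x y zxL (mem_head _ _) Pz Px R' Rxy.
  by move=> ezx; subst z; rewrite zL in xL.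
by apply: Hinj; rewrite in_cons ?h1 ?h2 orbT.
Qed.

Lemma count_le3 (T : eqType) (a b c d : pred T) (s : seq T) :
  (forall x, x \in s -> a x <= b x + c x + d x) ->
  count a s <= count b s + count c s + count d s.
Proof.
elim: s => //= x s IH H.
have h1 := H x (mem_head _ _).
have h2 : count a s <= count b s + count c s + count d s.
  by apply: IH => y ys; apply: H; rewrite in_cons ys orbT.
lia.
Qed.


Section Belady.
Variable U : eqType.
Variable k : nat.
Hypothesis Hk : 0 < k.

Inductive Run : seq U -> seq U -> nat -> Prop :=
| Run_nil C : Run C [::] 0
| Run_hit C r s n : r \in C -> Run C s n -> Run C (r :: s) n
| Run_add C r s n : r \notin C -> size C < k -> Run (rcons C r) s n -> Run C (r :: s) n.+1
| Run_evict C r s n y : r \notin C -> k <= size C -> y \in C ->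
    Run (rcons (rem y C) r) s n -> Run C (r :: s) n.+1.

Lemma Run_perm C s n : Run C s n -> forall C', perm_eq C C' -> Run C' s n.
Proof.
elim => {C s n} [C|C r s n rC _ IH|C r s n rC sC _ IH|C r s n y rC sC yC _ IH] C' pC.
- exact: Run_nil.
- by apply: Run_hit; [rewrite -(perm_mem pC) | exact: IH].
- apply: Run_add; first by rewrite -(perm_mem pC).
    by rewrite -(perm_size pC).
  by apply: IH; apply: perm_rcons2.
- apply: (@Run_evict _ _ _ _ y); first by rewrite -(perm_mem pC).
    by rewrite -(perm_size pC).
    by rewrite -(perm_mem pC).
  apply: IH; apply: perm_rcons2.
  exact: perm_rem2.
Qed.

Lemma Run_consE C r s n : Run C (r :: s) n ->
  (r \in C /\ Run C s n) \/
  (exists n', n = n'.+1 /\ r \notin C /\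
     ((size C < k /\ Run (rcons C r) s n') \/
      (k <= size C /\ exists y, y \in C /\ Run (rcons (rem y C) r) s n'))).
Proof.
move=> H; inversion H; subst.
- by left.
- by right; exists n0; split => //; split => //; left.
- by right; exists n0; split => //; split => //; right; split => //; exists y.
Qed.

Lemma E1 s : forall a b T n, k <= (size T).+1 -> Run (b :: T) s n ->
  exists m, m <= n.+1 /\ Run (a :: T) s m.
Proof.
elim: s => [|r s IH] a b T n sT H.
  by exists 0; split => //; apply: Run_nil.
case/Run_consE: H => [[rQ H]|[n' [-> [rQ [[sQ _]|[_ [y [yQ H]]]]]]]].
- case rP: (r \in a :: T).
    have [m [hm Hm]] := IH a b T n sT H.
    by exists m; split => //; apply: Run_hit.
  have rb : r = b.
    by move: rQ rP; rewrite !in_cons; case: eqP => // _ /= ->; rewrite orbT.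
  subst r; exists n.+1; split => //.
  apply: (@Run_evict _ _ _ _ a) => //; first by rewrite rP.
    by rewrite mem_head.
  rewrite /= eqxx; apply: (Run_perm H); by rewrite perm_sym perm_rcons.
- by move: sQ; rewrite /= ltnNge sT.
- case: (eqVneq r a) => [ra|ra].
  + subst r; case: (eqVneq y b) => [yb|yb].
      subst y; move: H; rewrite /= eqxx => H.
      exists n'; split; first lia.
      apply: Run_hit; first by rewrite mem_head.
      by apply: (Run_perm H); rewrite perm_rcons.
    have yT : y \in T by move: yQ; rewrite in_cons (negbTE yb).
    move: H; rewrite /= eq_sym (negbTE yb) rcons_cons => H.
    have sT' : k <= (size (rcons (rem y T) a)).+1 by rewrite size_rcons size_remS.
    have [m [hm Hm]] := IH y b _ n' sT' H.
    exists m; split; first lia.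
    apply: Run_hit; first by rewrite mem_head.
    apply: (Run_perm Hm).
    exact: perm_swap_rem.
  + have rT : r \notin T by move: rQ; rewrite in_cons negb_or => /andP [].
    have raT : r \notin a :: T by rewrite in_cons negb_or ra.
    case: (eqVneq y b) => [yb|yb].
      subst y; move: H; rewrite /= eqxx => H.
      exists n'.+1; split => //.
      apply: (@Run_evict _ _ _ _ a) => //; first by rewrite mem_head.
      by rewrite /= eqxx.
    have yT : y \in T by move: yQ; rewrite in_cons (negbTE yb).
    move: H; rewrite /= eq_sym (negbTE yb) rcons_cons => H.
    have sT' : k <= (size (rcons (rem y T) r)).+1 by rewrite size_rcons size_remS.
    have [m [hm Hm]] := IH a b _ n' sT' H.
    exists m.+1; split; first lia.
    apply: (@Run_evict _ _ _ _ y) => //; first by rewrite in_cons yT orbT.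
    apply: (Run_perm Hm); rewrite perm_sym -rcons_cons; apply: perm_rcons2.
    exact: perm_rem_cons.
Qed.

Lemma E2 s : forall a b T n, k <= (size T).+1 -> a \notin T ->
  index a s <= index b s -> Run (b :: T) s n ->
  exists m, m <= n /\ Run (a :: T) s m.
Proof.
elim: s => [|r s IH] a b T n sT aT idx H.
  by exists 0; split => //; apply: Run_nil.
case: (eqVneq a b) => [ab|ab]; first by subst b; exists n.
move: idx => /=.
case/Run_consE: H => [[rQ H]|[n' [-> [rQ [[sQ _]|[_ [y [yQ H]]]]]]]].
- case: (eqVneq b r) => [br|br].
    by subst r; rewrite eq_sym (negbTE ab).
  have rT : r \in T by move: rQ; rewrite in_cons eq_sym (negbTE br).
  have ar : a != r by apply: contraNneq aT => ->.
  rewrite (eq_sym r a) (negbTE ar) ltnS => idx.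
  have [m [hm Hm]] := IH a b T n sT aT idx H.
  by exists m; split => //; apply: Run_hit; rewrite // in_cons rT orbT.
- by move: sQ; rewrite /= ltnNge sT.
- case: (eqVneq r a) => [ra|ra] idx.
  + subst r; case: (eqVneq y b) => [yb|yb].
      subst y; move: H; rewrite /= eqxx => H.
      exists n'; split; first lia.
      apply: Run_hit; first by rewrite mem_head.
      by apply: (Run_perm H); rewrite perm_rcons.
    have yT : y \in T by move: yQ; rewrite in_cons (negbTE yb).
    move: H; rewrite /= eq_sym (negbTE yb) rcons_cons => H.
    have sT' : k <= (size (rcons (rem y T) a)).+1 by rewrite size_rcons size_remS.
    have [m [hm Hm]] := E1 y sT' H.
    exists m; split; first lia.
    apply: Run_hit; first by rewrite mem_head.
    apply: (Run_perm Hm).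
    exact: perm_swap_rem.
  + have rT : r \notin T by move: rQ; rewrite in_cons negb_or => /andP [].
    have rb : r != b by move: rQ; rewrite in_cons negb_or => /andP [].
    move: idx; rewrite (negbTE rb) ltnS => idx.
    case: (eqVneq y b) => [yb|yb].
      subst y; move: H; rewrite /= eqxx => H.
      exists n'.+1; split => //.
      apply: (@Run_evict _ _ _ _ a) => //; first by rewrite in_cons negb_or ra.
        by rewrite mem_head.
      by rewrite /= eqxx.
    have yT : y \in T by move: yQ; rewrite in_cons (negbTE yb).
    move: H; rewrite /= eq_sym (negbTE yb) rcons_cons => H.
    have sT' : k <= (size (rcons (rem y T) r)).+1 by rewrite size_rcons size_remS.
    have aT' : a \notin rcons (rem y T) r.
      rewrite mem_rcons in_cons negb_or eq_sym ra /=.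
      by apply: contra aT; apply: mem_rem.
    have [m [hm Hm]] := IH a b _ n' sT' aT' idx H.
    exists m.+1; split; first lia.
    apply: (@Run_evict _ _ _ _ y) => //; first by rewrite in_cons negb_or ra.
      by rewrite in_cons yT orbT.
    apply: (Run_perm Hm); rewrite perm_sym -rcons_cons; apply: perm_rcons2.
    exact: perm_rem_cons.
Qed.

Lemma Run_of_ev (ev : offline_alg U) s : forall t C, uniq C -> size C <= k ->
  Run C s (off_cost k ev t C s).
Proof.
elim: s => [|r s IH] t C uC sC /=; first exact: Run_nil.
rewrite /step; case: ifP => rC.
  by rewrite /= add0n; apply: Run_hit => //; apply: IH.
case: ifP => sk.
  rewrite /= add1n; apply: Run_add; rewrite ?rC //.
  by apply: IH; rewrite ?rcons_uniq ?rC ?size_rcons.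
set y := (if _ \in C then _ else _).
have yC : y \in C.
  rewrite /y; case: ifP => // _; case: C uC sC sk {rC y} => [|c C] //= _ _.
    by rewrite Hk.
  by rewrite mem_head.
rewrite /= add1n; apply: (@Run_evict _ _ _ _ y) => //; first by rewrite rC.
  by rewrite leqNgt sk.
apply: IH.
  rewrite rcons_uniq rem_uniq // andbT; apply: contra (negbT rC); exact: mem_rem.
by rewrite size_rcons size_remS.
Qed.

Lemma LFD_le (lfd : seq U -> nat -> seq U -> U) (HL : is_LFD_rule lfd) (I : seq U) s :
  forall t C n, drop t I = s -> uniq C -> size C <= k -> Run C s n ->
  off_cost k (lfd I) t C s <= n.
Proof.
elim: s => [|r s IH] t C n ds uC sC H //=.
have tI : t < size I by rewrite ltnNge; apply/negP => hh; move: ds; rewrite drop_oversize.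
have ds' : drop t.+1 I = s.
  by move: ds; rewrite (drop_nth r tI) => -[_ ->].
rewrite /step; case: ifP => rC.
  case/Run_consE: H => [[_ H]|[n' [_ [rC' _]]]]; last by rewrite rC in rC'.
  by rewrite add0n; apply: IH.
case/Run_consE: H => [[rC' _]|[n' [-> [_ H]]]]; first by rewrite rC in rC'.
rewrite add1n ltnS.
case: ifP => sk.
  case: H => [[_ H]|[hk _]]; last by rewrite leqNgt sk in hk.
  by apply: IH; rewrite ?rcons_uniq ?rC ?size_rcons.
case: H => [[hk _]|[_ [y [yC H]]]]; first by rewrite hk in sk.
have Cn : C != [::] by apply/eqP => C0; rewrite C0 in yC.
have [zC zrule] := HL I t C Cn.
set z := lfd I t C in zC zrule *.
rewrite zC.
have uC' : uniq (rcons (rem z C) r).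
  rewrite rcons_uniq rem_uniq // andbT; apply: contra (negbT rC); exact: mem_rem.
have sC' : size (rcons (rem z C) r) <= k by rewrite size_rcons size_remS.
case: (eqVneq y z) => [yz|yz].
  by subst y; apply: IH.
suff [m [hm Hm]] : exists m, m <= n' /\ Run (rcons (rem z C) r) s m.
  by apply: leq_trans hm; apply: IH.
have zy : z \in rem y C by apply: mem_rem_neq => //; rewrite eq_sym.
set T := rcons (rem z (rem y C)) r.
have HQ : Run (z :: T) s n'.
  apply: (Run_perm H); rewrite /T -rcons_cons; apply: perm_rcons2.
  exact: perm_to_rem.
have sT : k <= (size T).+1.
  by rewrite /T size_rcons size_remS // size_remS // leqNgt sk.
have yT : y \notin T.
  rewrite /T mem_rcons in_cons negb_or; apply/andP; split.
    by apply/eqP => ey; subst y; rewrite yC in rC.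
  by apply: contraFN (mem_rem_uniqF y uC); apply: mem_rem.
have idx : index y s <= index z s.
  move: zrule; rewrite /req_after /next_req ds'.
  case: ifP => _.
    by move=> zs; rewrite (memNindex zs) index_size.
  by move=> /(_ y yC); rewrite leq_add2l.
have [m [hm Hm]] := E2 sT yT idx HQ.
exists m; split => //; apply: (Run_perm Hm).
rewrite /T; rewrite perm_sym -rcons_cons; apply: perm_rcons2.
have yz' : y \in rem z C by apply: mem_rem_neq.
apply: (perm_trans (perm_to_rem yz')); rewrite perm_cons.
apply: uniq_perm; rewrite ?rem_uniq //.
move=> x; rewrite !mem_rem_uniq ?rem_uniq // !inE.
by rewrite !mem_rem_uniq // !inE andbCA.
Qed.

End Belady.


Section Traces.
Variable U : eqType.
Variable k : nat.
Hypothesis Hk : 0 < k.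
Variable x0 : U.

Lemma trace_step (ev : offline_alg U) s : forall t C j, j < size s ->
  nth [::] (C :: trace k ev t C s) j.+1 =
  step k (nth [::] (C :: trace k ev t C s) j) (nth x0 s j)
         (ev (t + j) (nth [::] (C :: trace k ev t C s) j)).
Proof.
elim: s => [|r s IH] t C [|j] //= hj.
  by rewrite addn0.
by move: (IH t.+1 (step k C r (ev t C)) j hj) => /= ->; rewrite addSnnS.
Qed.

Lemma cost_count (ev : offline_alg U) s : forall t C,
  off_cost k ev t C s =
  count (fun j => nth x0 s j \notin nth [::] (C :: trace k ev t C s) j) (iota 0 (size s)).
Proof.
elim: s => [|r s IH] t C //=.
rewrite IH; congr (_ + _).
by rewrite (iotaDl 1 0) count_map.
Qed.

Lemma step_mem (C : seq U) (r v : U) x : x \in step k C r v -> (x \in C) || (x == r).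
Proof.
rewrite /step; case: ifP => _; first by move=> ->.
case: ifP => _; rewrite mem_rcons in_cons => /orP [->|xs]; rewrite ?orbT ?xs //.
by rewrite (mem_rem xs).
Qed.

Lemma step_req (C : seq U) (r v : U) : r \in step k C r v.
Proof.
by rewrite /step; case: ifP => // _; case: ifP => _; rewrite mem_rcons mem_head.
Qed.

Lemma step_inv (C : seq U) (r v : U) : uniq C -> size C <= k -> uniq (step k C r v) && (size (step k C r v) <= k).
Proof.
move=> uC sC; rewrite /step; case: ifP => rC; first by rewrite uC sC.
case: ifP => sk; first by rewrite rcons_uniq rC uC size_rcons.
set y := (if _ \in C then _ else _).
have yC : y \in C.
  rewrite /y; case: ifP => // _; case: C uC sC sk {rC y} => [|c C] //= _ _.
    by rewrite Hk.
  by rewrite mem_head.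
rewrite rcons_uniq rem_uniq // andbT size_rcons size_remS // sC andbT.
by apply: contra (negbT rC); exact: mem_rem.
Qed.

Lemma step_evict (C : seq U) (r v : U) x : x \in C -> x \notin step k C r v ->
  [/\ r \notin C, k <= size C, x != r & x = (if v \in C then v else head r C)].
Proof.
move=> xC; rewrite /step; case: ifP => rC; first by rewrite xC.
case: ifP => sk; first by rewrite mem_rcons in_cons xC orbT.
rewrite mem_rcons in_cons negb_or => /andP [xr xn]; split => //.
  by rewrite leqNgt sk.
apply/eqP; apply: contraNT xn => ne; apply: mem_rem_neq => //; by rewrite eq_sym.
Qed.

Lemma step_order (C : seq U) (r v : U) x y : uniq C -> x \in C -> y \in C ->
  x \in step k C r v -> y \in step k C r v ->
  index x (step k C r v) < index y (step k C r v) -> index x C < index y C.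
Proof.
move=> uC xC yC; rewrite /step; case: ifP => rC //.
case: ifP => sk; first by move=> _ _; rewrite !index_rcons_in.
set w := (if _ \in C then _ else _).
have xr : x != r by apply: contraFneq rC => <-.
have yr : y != r by apply: contraFneq rC => <-.
rewrite !mem_rcons !in_cons (negbTE xr) (negbTE yr) /= => xw yw.
rewrite !index_rcons_in //; exact: rem_before.
Qed.

Lemma step_newlast (C : seq U) (r v : U) x : x \in C -> r \notin C -> x \in step k C r v ->
  index x (step k C r v) < index r (step k C r v).
Proof.
move=> xC rC; rewrite /step (negbTE rC).
have xr : x != r by apply: contraNneq rC => <-.
case: ifP => sk.
  by move=> _; rewrite index_rcons_in // index_rcons_last // index_mem.
rewrite mem_rcons in_cons (negbTE xr) /= => xw.
rewrite index_rcons_in // index_rcons_last ?index_mem //.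
by apply: contra rC; apply: mem_rem.
Qed.

End Traces.


Section Main.
Variable U : eqType.
Variable k : nat.
Hypothesis Hk : 0 < k.
Variable d : U.
Variable I : seq U.
Variable p : seq bool.
Hypothesis Hp : size p = size I.
Variable lfd : seq U -> nat -> seq U -> U.
Hypothesis HL : is_LFD_rule lfd.

Local Notation n := (size I).
Local Notation r_ j := (nth d I j).

Definition cf (ev : offline_alg U) j := nth [::] ([::] :: trace k ev 0 [::] I) j.

Lemma cfS ev j : j < n -> cf ev j.+1 = step k (cf ev j) (r_ j) (ev j (cf ev j)).
Proof. by move=> hj; rewrite /cf (trace_step k d). Qed.

Lemma cf0 ev : cf ev 0 = [::].
Proof. by []. Qed.

Lemma cf_inv ev j : j <= n -> uniq (cf ev j) && (size (cf ev j) <= k).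
Proof.
elim: j => [|j IH] hj; first by rewrite cf0.
rewrite cfS //; case/andP: (IH (ltnW hj)) => u s. have := step_inv Hk (r_ j) (ev j (cf ev j)) u s. by [].
Qed.

Lemma cf_req ev j : j < n -> r_ j \in cf ev j.+1.
Proof. by move=> hj; rewrite cfS // step_req. Qed.

Lemma cf_sub ev j x : j < n -> x \in cf ev j.+1 -> (x \in cf ev j) || (x == r_ j).
Proof. by move=> hj; rewrite cfS //; apply: step_mem. Qed.

Lemma cf_noret ev a b x : a <= b -> b <= n -> x \notin cf ev a ->
  (forall m, a <= m < b -> r_ m != x) -> x \notin cf ev b.
Proof.
elim: b => [|b IH] ab bn xa H; first by move: ab; rewrite leqn0 => /eqP <-.
case: (eqVneq a b.+1) => [<-//|ne].
have ab' : a <= b by lia.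
apply/negP => /(cf_sub bn) /orP [].
  by apply/negP; apply: IH => // [|m hm]; [lia | apply: H; lia].
by rewrite eq_sym; apply/negP; apply: H; lia.
Qed.

Lemma cf_persist ev a b x : a <= b -> b <= n -> x \in cf ev b ->
  (forall m, a <= m < b -> r_ m != x) -> x \in cf ev a.
Proof.
move=> ab bn xb H; apply/negPn/negP => xa.
by move: xb; apply/negP; apply: (cf_noret ab).
Qed.

Lemma cost_cf ev : offline_cost k ev I = count (fun j => r_ j \notin cf ev j) (iota 0 n).
Proof. by rewrite /offline_cost (cost_count k d). Qed.

Fixpoint prevt (t : nat) (x : U) : nat :=
  if t is t'.+1 then (if r_ t' == x then t' else prevt t' x) else 0.

Definition seen t x := has (fun m => r_ m == x) (iota 0 t).

Lemma seenP t x : reflect (exists2 m, m < t & r_ m = x) (seen t x).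
Proof.
apply: (iffP hasP) => [[m hm /eqP e]|[m hm e]]; exists m => //.
  by move: hm; rewrite mem_iota.
by rewrite mem_iota.
by rewrite e.
Qed.

Lemma prevt_spec t x : seen t x ->
  [/\ prevt t x < t, r_ (prevt t x) = x & forall m, prevt t x < m < t -> r_ m != x].
Proof.
elim: t => [|t IH]; first by case/seenP.
move=> /seenP [m hm rm] /=.
case: (eqVneq (r_ t) x) => [e|ne].
  by split => // m' hm'; lia.
have hs : seen t x.
  apply/seenP; exists m => //; rewrite ltn_neqAle -ltnS hm andbT.
  by apply: contraNneq ne => <-; rewrite rm.
have [h1 h2 h3] := IH hs; split => //; first lia.
move=> m' hm'; case: (eqVneq m' t) => [->//|ne']; apply: h3; lia.
Qed.

Lemma cf_seen ev j x : j <= n -> x \in cf ev j -> seen j x.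
Proof.
move=> jn xj; apply/negPn/negP => ns.
move: xj; apply/negP; apply: (@cf_noret ev 0) => //.
move=> m hm; apply/negP => /eqP e; move/negP: ns; apply; apply/seenP.
by exists m.
Qed.

Definition lab (h : seq (U * bool)) (q : U) : bool :=
  (last (q, false) [seq x <- h | x.1 == q]).2.

Definition alg : online_alg U := fun c h => head (head d c) [seq q <- c | lab h q].

Local Notation Z := (zip I p).

Definition evA : offline_alg U := fun t c => alg c (take t.+1 Z).

Lemma on_off rest : forall hist C, hist ++ rest = Z ->
  on_cost k alg C hist rest = off_cost k evA (size hist) C (unzip1 rest).
Proof.
elim: rest => [|[r b] rest IH] hist C //= e.
have ht : take (size hist).+1 Z = rcons hist (r, b).
  by rewrite -e take_cat ltnNge leqnSn /= subSnn /= take0 cats1.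
by rewrite /evA ht IH ?size_rcons // cat_rcons.
Qed.

Lemma ALG_eq : ALG k alg I p = offline_cost k evA I.
Proof.
by rewrite /ALG (on_off (hist := [::])) //= unzip1_zip // Hp.
Qed.

Lemma lab_take t q : t < n ->
  lab (take t.+1 Z) q = if r_ t == q then nth false p t else lab (take t Z) q.
Proof.
move=> tn; have tZ : t < size Z by rewrite size_zip Hp minnn.
rewrite (take_nth (d, false) tZ) /lab filter_rcons nth_zip ?Hp //=.
by case: ifP => //; rewrite last_rcons.
Qed.

Lemma lab_prev s t q : s < t -> t <= n -> r_ s = q ->
  (forall m, s < m < t -> r_ m != q) -> lab (take t Z) q = nth false p s.
Proof.
elim: t => [|t IH] // st tn rs H.
rewrite lab_take //.
case: (eqVneq t s) => [->|ne]; first by rewrite rs eqxx.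
have -> : (r_ t == q) = false by apply/negbTE; apply: H; lia.
apply: IH => //; [lia | lia | move=> m hm; apply: H; lia].
Qed.

Lemma nr_eq i j x : i < j -> j < n -> r_ j = x ->
  (forall m, i < m < j -> r_ m != x) -> next_req I i x = j.
Proof.
move=> ij jn rj H; rewrite /next_req.
rewrite (@index_eq _ d x (drop i.+1 I) (j - i.+1)).
- lia.
- rewrite size_drop; lia.
- by rewrite nth_drop; have -> : i.+1 + (j - i.+1) = j by lia.
- by move=> m hm; rewrite nth_drop; apply: H; lia.
Qed.

Lemma nr_gt i t x : i <= t -> t < n ->
  (forall m, i < m <= t -> r_ m != x) -> t < next_req I i x.
Proof.
move=> it tn H; rewrite /next_req.
suff : t - i <= index x (drop i.+1 I) by lia.
apply: (@index_ge _ d); first by rewrite size_drop; lia.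
by move=> m hm; rewrite nth_drop; apply: H; lia.
Qed.

Local Notation L := (cf (lfd I)).

Lemma pstar_intro i t x : i <= t -> t < next_req I i x -> x \notin L t.+1 ->
  pstar k lfd I i x.
Proof.
move=> it tn xL; rewrite /pstar; apply/negP => /allP H.
have := H t; rewrite mem_iota => /(_ ltac:(lia)).
by apply/negP.
Qed.

Lemma pstar_elimF i t x : ~~ pstar k lfd I i x -> i <= t -> t < next_req I i x ->
  x \in L t.+1.
Proof.
rewrite /pstar negbK => /allP H it tn.
by have := H t; rewrite mem_iota => /(_ ltac:(lia)).
Qed.

Lemma pstar_elimT i x : pstar k lfd I i x ->
  exists t, [/\ i <= t, t < next_req I i x & x \notin L t.+1].
Proof.
rewrite /pstar => /allPn [t]; rewrite mem_iota => ht xt.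
by exists t; split => //; lia.
Qed.

Lemma eta_count h : eta k lfd h I p =
  count (fun i => (nth false p i == h) && (pstar k lfd I i (r_ i) == ~~ h)) (iota 0 n).
Proof.
rewrite /eta.
have -> : zip (zip (iota 0 n) I) p = [seq (i, r_ i, nth false p i) | i <- iota 0 n].
  apply: (@eq_from_nth _ (0, d, false)).
    by rewrite size_map size_zip size_zip size_iota Hp !minnn.
  move=> i; rewrite size_zip size_zip size_iota Hp !minnn => hi.
  rewrite nth_zip ?size_zip ?size_iota ?Hp ?minnn //.
  rewrite nth_zip ?size_iota //.
  by rewrite (nth_map 0) ?size_iota // nth_iota.
by rewrite count_map.
Qed.

Lemma down_ind (P : nat -> Prop) s t : P t ->
  (forall m, s < m -> m < t -> P m.+1 -> P m) -> forall m, s < m -> m <= t -> P m.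
Proof.
move=> Pt H m sm mt.
move: {2}(t - m) (erefl (t - m)) => dd.
elim: dd m sm mt => [|dd IH] m sm mt e.
  by have -> : m = t by lia.
apply: H => //; first lia.
apply: IH; lia.
Qed.

Lemma drop_point (P : nat -> bool) a b : a <= b -> P a -> ~~ P b ->
  exists t, [/\ a <= t, t < b, P t & ~~ P t.+1].
Proof.
elim: b => [|b IH] ab Pa Pb.
  by move: ab; rewrite leqn0 => /eqP e; subst a; rewrite Pa in Pb.
case: (eqVneq a b.+1) => [e|ne]; first by subst a; rewrite Pa in Pb.
case Pb': (P b).
  by exists b; split => //; lia.
have [t [h1 h2 h3 h4]] := IH ltac:(lia) Pa (negbT Pb').
by exists t; split => //; lia.
Qed.

Local Notation A := (cf evA).

Definition pv j := prevt j (r_ j).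
Definition b1 j := [&& seen j (r_ j), nth false p (pv j) & ~~ pstar k lfd I (pv j) (r_ j)].
Definition b0 j := [&& seen j (r_ j), ~~ nth false p (pv j), ~~ pstar k lfd I (pv j) (r_ j)
  & r_ j \notin A j].

Lemma pointwise j : j < n ->
  (r_ j \notin A j) <= (r_ j \notin L j) + b1 j + b0 j.
Proof.
move=> jn; case fa: (r_ j \in A j) => //=.
have notL : r_ j \notin L j -> 1 <= (r_ j \notin L j) + b1 j + b0 j by move=> ->.
case sj: (seen j (r_ j)); last first.
  apply: notL; apply: (@cf_noret _ 0) => //; first by lia.
  move=> m hm; apply/eqP => e; move/negP: sj; apply; apply/seenP; exists m => //; lia.
have [ij ri H] := prevt_spec sj.
have nr : next_req I (pv j) (r_ j) = j by apply: nr_eq.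
case ps: (pstar k lfd I (pv j) (r_ j)).
  apply: notL; have [t [it tn xt]] := pstar_elimT ps.
  apply: (@cf_noret _ t.+1) => //; [lia | lia |].
  move=> m hm; apply: H; rewrite /pv in it; lia.
rewrite /b1 /b0 sj ps fa /=; case: (nth false p (pv j)) => //=; lia.
Qed.

Ltac nlia := repeat match goal with H : ?T |- _ =>
  lazymatch T with
  | is_true (_ <= _) => fail
  | is_true (_ && _) => fail
  | (@eq nat _ _) => fail
  | _ => clear H
  end end; lia.

Definition Rw j s :=
  exists t, [/\ pv j < t, t < j, s < t, r_ j \notin A t.+1 & forall m, s < m -> m <= t -> r_ j \in A m].

Lemma b0_wit j : j < n -> b0 j ->
  exists s, [/\ s < n, nth false p s = false, pstar k lfd I s (r_ s),
                 Rw j s & index (r_ j) (A s.+1) < k.-1].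
Proof.
move=> jn /and4P [sj np nps nA].
have [ij ri H] := prevt_spec sj.
have nr : next_req I (pv j) (r_ j) = j by apply: nr_eq.
rewrite /Rw.
move: ij ri H np nps nr nA; rewrite -/(pv j).
move Ei: (pv j) => i; move Er: (r_ j) => r ij ri H np nps nr nA.
have rAi : r \in A i.+1 by rewrite -ri; apply: cf_req; nlia.
have [t [it tj rt rt1]] := @drop_point (fun m => r \in A m) i.+1 j ij rAi nA.
have tn : t < n by nlia.
have rt1' := rt1.
move: rt1; rewrite cfS // => rt1.
have [rtC sk rrt rv] := step_evict rt rt1.
have [uC sCk] := andP (cf_inv evA (ltnW tn)).
have rL : r \in L t.+1 by apply: (pstar_elimF nps); nlia.
have [uL sL] := andP (cf_inv (lfd I) tn).
have rtL : r_ t \in L t.+1 by apply: cf_req.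
have seenC : forall x, x \in A t -> seen t x by move=> x; apply: (cf_seen (ltnW tn)).
have labr : lab (take t.+1 Z) r = false.
  rewrite (@lab_prev i) //; [by apply/negbTE | nlia | move=> m hm; apply: H; nlia].
move: rt rtC sk rv uC sCk seenC; move EC: (A t) => C rt rtC sk rv uC sCk seenC.
have Cne : C = head d C :: behead C by case: (C) rt.
have hdC : head d C \in C by rewrite Cne mem_head.
have Fnil : [seq q <- C | lab (take t.+1 Z) q] = [::].
  case E: [seq q <- C | lab (take t.+1 Z) q] => [//|q qs].
  have qF : q \in [seq q <- C | lab (take t.+1 Z) q] by rewrite E mem_head.
  move: rv; rewrite /evA /alg E /=.
  have -> : q \in C by move: qF; rewrite mem_filter => /andP [].
  by move=> e; subst q; move: qF; rewrite mem_filter labr.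
have labC : forall q, q \in C -> lab (take t.+1 Z) q = false.
  move=> q qC; apply/negP => lq.
  have : q \in [seq q <- C | lab (take t.+1 Z) q] by rewrite mem_filter lq.
  by rewrite Fnil.
have rhead : r = head d C by move: rv; rewrite /evA /alg Fnil /= hdC.
have idxr : index r C = 0 by rewrite Cne -rhead /= eqxx.
(* pigeonhole *)
have [e eC eL] : exists2 e, e \in C & e \notin L t.+1.
  case: (boolP (all (fun q => q \in L t.+1) C)) => [/allP hall|/allPn [e eC eL]]; last by exists e.
  exfalso.
  have : size (r_ t :: C) <= size (L t.+1).
    apply: uniq_leq_size; first by rewrite /= rtC.
    move=> q; rewrite in_cons => /orP [/eqP ->|qC] //; exact: hall.
  rewrite /= => h1; move: sk sL h1; clear; nlia.
have er : e != r by apply: contraNneq eL => ->.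
have ert : e != r_ t by apply: contraNneq rtC => <-.
have se : seen t e by apply: seenC.
have [st rs Hs] := prevt_spec se.
move: st rs Hs; move Es: (prevt t e) => s st rs Hs.
have Hs' : forall m, s < m <= t -> r_ m != e.
  move=> m hm; case: (eqVneq m t) => [->|ne]; first by rewrite eq_sym.
  apply: Hs; move: hm ne; clear; nlia.
have ps : nth false p s = false.
  have hl : lab (take t.+1 Z) e = nth false p s.
    apply: (@lab_prev s t.+1 e) => //; try (move: st; clear; nlia); move=> m hm; apply: Hs'; move: hm; clear; nlia.
  by rewrite -hl labC.
have pss : pstar k lfd I s (r_ s).
  rewrite rs; apply: (@pstar_intro _ t) => //; first by move: st; clear; nlia.
  by apply: nr_gt => //; move: st; clear; nlia.
have eA : forall m, s < m -> m <= t -> e \in A m.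
  move=> m sm mt; apply: (@cf_persist _ m t) => //; first by move: tn; clear; nlia.
    by rewrite EC.
  move=> m' hm'; apply: Hs'; move: hm' sm; clear; nlia.
have key : forall m, s < m -> m <= t -> r \in A m /\ index r (A m) < index e (A m).
  apply: down_ind.
    rewrite EC; split => //; rewrite idxr.
    rewrite lt0n; apply/negP => /eqP h0; have := nth_index d eC; rewrite h0 Cne /= -rhead => ee; by rewrite ee eqxx in er.
  move=> m sm mt [rm1 im1].
  have mn : m < n by move: mt tn; clear; nlia.
  have [um _] := andP (cf_inv evA (ltnW mn)).
  have em := eA m sm (ltnW mt).
  have em1 := eA m.+1 (ltn_trans sm (ltnSn m)) mt.
  have rm : r \in A m.
    apply/negPn/negP => rm.
    have rrm : r = r_ m.
      by move: (cf_sub mn rm1); rewrite (negbTE rm) /= => /eqP.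
    move: im1 em1; rewrite cfS // -rrm => im1 em1.
    have := step_newlast em rm em1; move: im1; clear; nlia.
  split => //.
  move: im1 rm1 em1; rewrite cfS // => im1 rm1 em1.
  exact: (step_order um rm em rm1 em1 im1).
have [r1 i1] := key s.+1 (ltnSn s) st.
exists s; split => //; first by move: st tn; clear; nlia.
  exists t; split => //; try (move: it; clear; nlia); move=> m hm1 hm2; exact: (key m hm1 hm2).1.
have sn : s.+1 <= n by move: st tn; clear; nlia.
have := cf_inv evA sn; case/andP => _ sA.
have : index e (A s.+1) < size (A s.+1) by rewrite index_mem; apply: eA => //; apply: ltnSn.
move=> h; move: sA i1 h Hk; clear; move: (index r (A s.+1)) (index e (A s.+1)) (size (A s.+1)) => a b c. rewrite -subn1; lia.
Qed.

Lemma count_b1 : count b1 (iota 0 n) <= eta k lfd true I p.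
Proof.
rewrite eta_count -[X in _ <= X]size_filter.
apply: (@count_inj _ _ b1 (fun j y => y = pv j)); first exact: iota_uniq.
  move=> x; rewrite mem_iota => /andP [_ xn] /and3P [sx px npx].
  have [h1 h2 h3] := prevt_spec sx.
  exists (pv x); split => //; rewrite mem_filter mem_iota /= px /=.
  rewrite /pv h2 (negbTE npx) /=; move: h1 xn; rewrite /pv; clear; lia.
move=> x1 x2 y _ _ /and3P [s1 _ _] /and3P [s2 _ _] -> e.
have [a1 a2 a3] := prevt_spec s1.
have [b1' b2 b3] := prevt_spec s2.
rewrite -/(pv x1) -/(pv x2) in a1 a2 a3 b1' b2 b3.
have ee : r_ x1 = r_ x2 by rewrite -a2 -b2 e.
case: (ltngtP x1 x2) => // lt.
  by have := b3 x1; rewrite ee eqxx => /(_ ltac:(rewrite -e; lia)).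
by have := a3 x2; rewrite ee eqxx => /(_ ltac:(rewrite e; lia)).
Qed.

Lemma b0_inj_aux j1 j2 s : j1 < j2 -> r_ j1 = r_ j2 -> seen j2 (r_ j2) ->
  Rw j1 s -> Rw j2 s -> False.
Proof.
move=> lt ee sj [t1 [_ h2 h3 h4 _]] [t2 [g1 _ _ _ g5]].
have [p1 p2 p3] := prevt_spec sj.
rewrite -/(pv j2) in p1 p2 p3.
have jp : j1 <= pv j2.
  rewrite leqNgt; apply/negP => hp.
  by have := p3 j1; rewrite ee eqxx => /(_ ltac:(lia)).
have := g5 t1.+1 ltac:(lia) ltac:(lia).
by rewrite -ee (negbTE h4).
Qed.

Lemma count_b0 : count b0 (iota 0 n) <= (k - 1) * eta k lfd false I p.
Proof.
rewrite eta_count mulnC subn1 -[X in _ <= X * _]size_filter.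
set E0 := [seq x <- iota 0 n | _].
rewrite -(size_iota 0 k.-1) -(size_allpairs (fun (a : nat) (b : nat) => (a, b))).
apply: (@count_inj _ _ b0 (fun j y => Rw j y.1 /\ y.2 = index (r_ j) (A y.1.+1)));
  first exact: iota_uniq.
  move=> x; rewrite mem_iota => /andP [_ xn] bx.
  have [s [sn ps pss Rs ix]] := b0_wit xn bx.
  exists (s, index (r_ x) (A s.+1)); split => //.
  apply/allpairsP; exists (s, index (r_ x) (A s.+1)); split => //.
    by rewrite mem_filter mem_iota ps pss /= sn.
  by rewrite mem_iota /= ix.
move=> x1 x2 [s pos] _ _ /and4P [s1 _ _ _] /and4P [s2 _ _ _] /= [R1 e1] [R2 e2].
have inA : forall j, Rw j s -> r_ j \in A s.+1.
  by move=> j [t [_ _ st _ H]]; apply: H.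
have ee : r_ x1 = r_ x2.
  by rewrite -(nth_index d (inA _ R1)) -(nth_index d (inA _ R2)) -e1 -e2.
case: (ltngtP x1 x2) => // lt.
  by have := b0_inj_aux lt ee s2 R1 R2.
by have := b0_inj_aux lt (esym ee) s1 R2 R1.
Qed.

Lemma main_bound opt : is_OPT k I opt ->
  ALG k alg I p <= opt + (k - 1) * eta k lfd false I p + eta k lfd true I p.
Proof.
move=> [[ev evopt] _].
have hL : offline_cost k (lfd I) I <= opt.
  rewrite -evopt; apply: (LFD_le Hk HL (t := 0)) => //.
    by rewrite drop0.
  exact: (Run_of_ev Hk ev I 0 (C:=[::])).
rewrite ALG_eq cost_cf.
apply: leq_trans (count_le3 (b := fun j => r_ j \notin L j) (c := b1) (d := b0) _) _.
  by move=> x; rewrite mem_iota => /andP [_ xn]; apply: pointwise.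
rewrite -cost_cf.
move: hL (count_b0) (count_b1); move: (offline_cost k (lfd I) I) (count b1 (iota 0 n)) (count b0 (iota 0 n)) ((k - 1) * eta k lfd false I p) (eta k lfd true I p) => a b c e f; lia.
Qed.

End Main.


Unset Implicit Arguments.

Theorem theorem1 (U : eqType) (k : nat) :
  1 <= k ->
  forall lfd : seq U -> nat -> seq U -> U, is_LFD_rule lfd ->
  exists (alg : online_alg U) (b : nat),
    forall (I : seq U) (p : seq bool), size p = size I ->
    forall opt : nat, is_OPT k I opt ->
      ALG k alg I p <= opt + (k - 1) * eta k lfd false I p + eta k lfd true I p + b.
Proof.
move=> Hk lfd HL.
exists (alg (lfd [::] 0 [::])), 0 => I p Hp opt Hopt.
rewrite addn0; exact: (main_bound Hk (lfd [::] 0 [::]) Hp HL Hopt).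
Qed.
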